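(* Let $M, K, P, N$ be positive integers with $M \le K \le P$ and such that $P$ divides $N$. Let $\mathbf{A} = [\mathbf{a}_1, \ldots, \mathbf{a}_M]^T \in \mathbb{R}^{M \times N}$ be any matrix, and let $\mathbf{B} \in \mathbb{R}^{P \times K}$ be a matrix such that every square sub-matrix of $\mathbf{B}$ is invertible. For vectors $\mathbf{z}_1, \ldots, \mathbf{z}_{K-M} \in \mathbb{R}^N$, let $\tilde{\mathbf{A}} = [\mathbf{a}_1, \ldots, \mathbf{a}_M, \mathbf{z}_1, \ldots, \mathbf{z}_{K-M}]^T \in \mathbb{R}^{K \times N}$ be the matrix obtained by appending the rows $\mathbf{z}_1^T, \ldots, \mathbf{z}_{K-M}^T$ to $\mathbf{A}$. Then there exists a choice of $\mathbf{z}_1, \ldots, \mathbf{z}_{K-M}$ such that every row of $\mathbf{F} = \mathbf{B}\tilde{\mathbf{A}}$ has sparsity at most $s = \frac{N}{P}(P-K+M)$.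
   Context: The sparsity of a vector is its number of nonzero entries. A square sub-matrix of $\mathbf{B}$ is a matrix obtained by selecting some set of $r$ rows and some set of $r$ columns of $\mathbf{B}$ (for any $r \ge 1$). *)

(* Defs.v *)
From HB Require Import structures.
From mathcomp Require Import all_boot all_order all_algebra.
From mathcomp Require Import reals.
Set Implicit Arguments. Unset Strict Implicit. Unset Printing Implicit Defensive.
Import Order.TTheory GRing.Theory Num.Theory.
Local Open Scope ring_scope.

Definition sparsity (R : ringType) (n : nat) (v : 'rV[R]_n) : nat :=
  #|[set j : 'I_n | v 0 j != 0]|.

Definition all_square_submx_invertible (R : fieldType) (p k : nat)
    (B : 'M[R]_(p, k)) : Prop :=
  forall (r : nat) (f : 'I_r -> 'I_p) (g : 'I_r -> 'I_k),
    (0 < r)%N -> injective f -> injective g ->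
    mxsub f g B \in unitmx.

Definition append_rows (R : Type) (M K N : nat) (hMK : (M <= K)%N)
    (A : 'M[R]_(M, N)) (Z : 'M[R]_(K - M, N)) : 'M[R]_(K, N) :=
  castmx (subnKC hMK, erefl N) (col_mx A Z).

(* Main.v *)
Require Import Defs.
From HB Require Import structures.
From mathcomp Require Import all_boot all_order all_algebra.
From mathcomp Require Import reals.
From mathcomp Require Import zify.
Import Order.TTheory GRing.Theory Num.Theory.
Local Open Scope ring_scope.

Lemma sum_mod (p L : nat) (h : nat -> nat) :
  (\sum_(0 <= j < L * p) h (j %% p) = L * \sum_(0 <= b < p) h (b %% p))%N.
Proof.
elim: L => [|L IH]; first by rewrite mul0n big_geq.
rewrite mulSnr (@big_cat_nat _ _ _ (L * p)%N) ?leq_addr //= IH mulSnr.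
congr (_ + _)%N.
rewrite -{1}(add0n (L * p)%N) big_addn addnC addnK.
apply: eq_bigr => i _.
by rewrite addnC modnMDl.
Qed.

Lemma sum_ge (n m : nat) : (\sum_(0 <= b < n) ((m <= b)%N : nat) = n - m)%N.
Proof.
elim: n => [|n IH]; first by rewrite big_geq.
rewrite big_nat_recr //= IH.
case: (leqP m n) => H /=; lia.
Qed.

Lemma cast_mul (R : pzRingType) (p m k n : nat) (e : m = k)
  (B : 'M[R]_(p, k)) (X : 'M[R]_(m, n)) :
  B *m castmx (e, erefl n) X = castmx (erefl p, esym e) B *m X.
Proof. by case: k / e B => B; rewrite !castmx_id. Qed.

Lemma card_sum (n : nat) (P : pred 'I_n) :
  #|[set j | P j]| = (\sum_(j < n) (P j : nat))%N.
Proof.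
rewrite -sum1_card big_mkcond /=; apply: eq_bigr => j _.
by rewrite inE; case: (P j).
Qed.

Theorem lemma2 (R : realType) (M K P N : nat)
  (hM : (0 < M)%N) (hK : (0 < K)%N) (hP : (0 < P)%N) (hN : (0 < N)%N)
  (hMK : (M <= K)%N) (hKP : (K <= P)%N) (hPN : (P %| N)%N)
  (A : 'M[R]_(M, N)) (B : 'M[R]_(P, K))
  (hB : all_square_submx_invertible B) :
  exists Z : 'M[R]_(K - M, N),
    forall i : 'I_P,
      (sparsity (row i (B *m append_rows hMK A Z)) <= N %/ P * (P - K + M))%N.
Proof.
case: P hP hKP hPN B hB => [//|p] hP hKP hPN B hB.
have hNL : N = (N %/ p.+1 * p.+1)%N by rewrite divnK.
case: (posnP (K - M)) => [k0|kpos].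
  exists 0 => i.
  rewrite /sparsity.
  apply: (leq_trans (max_card _)); rewrite card_ord.
  have -> : (p.+1 - K + M = p.+1)%N by lia.
  by rewrite -hNL.
pose k := (K - M)%N.
have e : (M + k = K)%N := subnKC hMK.
pose B' := castmx (erefl p.+1, esym e) B.
pose B1 := lsubmx B'.
pose B2 := rsubmx B'.
have hFE : forall Z, B *m append_rows hMK A Z = B1 *m A + B2 *m Z.
  move=> Z; rewrite /append_rows cast_mul -mul_row_col hsubmxK.
  congr (_ *m _); apply/matrixP => a b; rewrite !castmxE /=.
  by congr (B _ _); apply: val_inj.
pose f (c : 'I_p.+1) (t : 'I_k) : 'I_p.+1 := inord t - c.
pose g (t : 'I_k) : 'I_K := cast_ord e (rshift M t).
have finj : forall c, injective (f c).
  move=> c t t' /addIr /(congr1 (@nat_of_ord _)); rewrite !inordK; last 2 first.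
  1,2: by move: (ltn_ord t) (ltn_ord t'); rewrite /k; lia.
  by move=> h; apply: val_inj.
have ginj : injective g.
  by move=> t t' /(congr1 val) /= /eqP; rewrite eqn_add2l => /eqP h; apply: val_inj.
pose S c := rowsub (f c) B2.
have Su : forall c, S c \in unitmx.
  move=> c; have := hB k (f c) g kpos (finj c) ginj.
  suff -> : mxsub (f c) g B = S c by [].
  apply/matrixP => a b; rewrite !mxE castmxE /=.
  by congr (B _ _); apply: val_inj.
pose c (j : 'I_N) : 'I_p.+1 := inZp j.
pose Y cc := rowsub (f cc) (B1 *m A).
pose Z := \matrix_(t, j) (- (invmx (S (c j)) *m Y (c j))) t j.
have zero : forall j t, (B1 *m A + B2 *m Z) (f (c j) t) j = 0.
  move=> j t.
  pose W := - (invmx (S (c j)) *m Y (c j)).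
  rewrite [LHS]mxE.
  have -> : (B2 *m Z) (f (c j) t) j = (S (c j) *m W) t j.
    rewrite !mxE; apply: eq_bigr => s _; by rewrite !mxE.
  rewrite /W mulmxN mulKVmx // !mxE.
  by rewrite subrr.
exists Z => i.
rewrite hFE /sparsity.
have sub : [set j : 'I_N | row i (B1 *m A + B2 *m Z) 0 j != 0]
    \subset [set j : 'I_N | (k <= val (i + c j)%R)%N].
  apply/subsetP => j; rewrite !inE; apply: contraR; rewrite -ltnNge => H.
  have -> : i = f (c j) (Ordinal H).
    rewrite /f; have -> : (inord (Ordinal H) : 'I_p.+1) = i + c j by apply: inord_val.
    by rewrite addrK.
  by rewrite mxE zero.
apply: (leq_trans (subset_leq_card sub)).
rewrite card_sum.
pose h (n : nat) : nat := (k <= val (i + (inZp n : 'I_p.+1))%R)%N.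
have hh : forall n, h n = h (n %% p.+1)%N.
  move=> n; rewrite /h; suff -> : (inZp (n %% p.+1) : 'I_p.+1) = inZp n by [].
  apply: val_inj.
  by rewrite /= modn_mod.
rewrite (eq_bigr (fun j : 'I_N => h j)) //.
rewrite -(big_mkord xpredT h).
rewrite [in X in (\sum_(0 <= _ < X) _)%N]hNL.
rewrite (eq_bigr (fun j => h (j %% p.+1)%N)); last by move=> j _; rewrite -hh.
rewrite sum_mod.
rewrite (eq_bigr h); last by move=> j _; rewrite -hh.
rewrite big_mkord.
have -> : (\sum_(b < p.+1) h b = \sum_(b < p.+1) ((k <= val b)%N : nat))%N.
  rewrite [RHS](reindex_inj (addrI i)); apply: eq_bigr => b _.
  by rewrite /h valZpK.
rewrite -(big_mkord xpredT (fun b => ((k <= b)%N : nat))) sum_ge.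
rewrite /k; apply: leq_mul => //; lia.
Qed.
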